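(* Let $\mathcal{R}$ be a finite set of axis-parallel rectangles in the plane. Then the piercing graph $H$ of $\mathcal{R}$ is a comparability graph.
   Context: The piercing graph $H=(\mathcal{R},E)$ has an edge $\{R_1,R_2\}$ iff $R_1$ and $R_2$ pierce, i.e., they intersect but neither contains a corner of the other. A graph on vertex set $V$ is a comparability graph if it is obtained from (the transitive closure of) a partial order on $V$ by joining every pair of comparable elements and forgetting directions. *)

(* Defs.v *)
From mathcomp Require Import all_boot all_order all_algebra.
From mathcomp Require Import reals.
Set Implicit Arguments. Unset Strict Implicit. Unset Printing Implicit Defensive.
Import Order.TTheory GRing.Theory Num.Theory.
Local Open Scope ring_scope.

Section Rect.
Variable R : realType.

(* A (closed) axis-parallel rectangle [xl, xr] x [yl, yr]. *)
Record rect := Rect { xl : R; xr : R; yl : R; yr : R }.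

Definition rect_valid (r : rect) : Prop := xl r < xr r /\ yl r < yr r.

Definition in_rect (r : rect) (p : R * R) : Prop :=
  xl r <= p.1 <= xr r /\ yl r <= p.2 <= yr r.

Definition corners (r : rect) : seq (R * R) :=
  [:: (xl r, yl r); (xl r, yr r); (xr r, yl r); (xr r, yr r)].

Definition rects_intersect (r1 r2 : rect) : Prop :=
  exists p : R * R, in_rect r1 p /\ in_rect r2 p.

Definition contains_corner_of (r1 r2 : rect) : Prop :=
  exists2 p, p \in corners r2 & in_rect r1 p.

Definition pierce (r1 r2 : rect) : Prop :=
  rects_intersect r1 r2 /\ ~ contains_corner_of r1 r2 /\ ~ contains_corner_of r2 r1.

End Rect.

Definition piercing_graph (R : realType) (T : Type) (rect_of : T -> rect R)
  (x y : T) : Prop := x <> y /\ pierce (rect_of x) (rect_of y).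

Definition comparability_graph (V : Type) (E : V -> V -> Prop) : Prop :=
  exists lt : V -> V -> Prop,
    (forall x, ~ lt x x) /\
    (forall x y z, lt x y -> lt y z -> lt x z) /\
    (forall x y, x <> y -> (E x y <-> (lt x y \/ lt y x))).

(* Main.v *)
Require Import Defs.
From mathcomp Require Import all_boot all_order all_algebra.
From mathcomp Require Import reals.
From mathcomp Require Import lra.
Set Implicit Arguments. Unset Strict Implicit. Unset Printing Implicit Defensive.
Import Order.TTheory GRing.Theory Num.Theory.
Local Open Scope ring_scope.

Lemma interval_case (R : realType) (a1 b1 a2 b2 p : R) :
  a1 <= p -> p <= b1 -> a2 <= p -> p <= b2 ->
  (a1 <= a2 /\ a2 <= b1) \/ (a1 <= b2 /\ b2 <= b1) \/ (a2 < a1 /\ b1 < b2).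
Proof.
move=> h1 h2 h3 h4.
have [h5|h5] := leP a1 a2; first by left; split => //; lra.
have [h6|h6] := leP b2 b1; first by right; left; split => //; lra.
by right; right.
Qed.

Lemma no_corner (R : realType) (r1 r2 : rect R) (p : R * R) :
  in_rect r1 p -> in_rect r2 p -> ~ contains_corner_of r1 r2 ->
  (xl r2 < xl r1 /\ xr r1 < xr r2) \/ (yl r2 < yl r1 /\ yr r1 < yr r2).
Proof.
rewrite /in_rect => -[/andP[x1 x2] /andP[y1 y2]] [/andP[x3 x4] /andP[y3 y4]] nc.
have [hx|[hx|hx]] := interval_case x1 x2 x3 x4; last by left.
- have [hy|[hy|hy]] := interval_case y1 y2 y3 y4; last by right.
  + exfalso; apply: nc; exists (xl r2, yl r2); first by rewrite !inE eqxx.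
    by rewrite /in_rect /= hx.1 hx.2 hy.1 hy.2.
  + exfalso; apply: nc; exists (xl r2, yr r2); first by rewrite !inE eqxx !orbT.
    by rewrite /in_rect /= hx.1 hx.2 hy.1 hy.2.
- have [hy|[hy|hy]] := interval_case y1 y2 y3 y4; last by right.
  + exfalso; apply: nc; exists (xr r2, yl r2); first by rewrite !inE eqxx !orbT.
    by rewrite /in_rect /= hx.1 hx.2 hy.1 hy.2.
  + exfalso; apply: nc; exists (xr r2, yr r2); first by rewrite !inE eqxx !orbT.
    by rewrite /in_rect /= hx.1 hx.2 hy.1 hy.2.
Qed.

Definition cross (R : realType) (a b : rect R) : Prop :=
  xl a < xl b /\ xr b < xr a /\ yl b < yl a /\ yr a < yr b.

Lemma cross_pierce (R : realType) (a b : rect R) :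
  rect_valid a -> rect_valid b -> cross a b -> pierce a b.
Proof.
move=> [va1 va2] [vb1 vb2] [c1 [c2 [c3 c4]]].
split; [|split].
- exists (xl b, yl a); rewrite /in_rect /=.
  split; repeat (apply/andP; split); lra.
- move=> [q]; rewrite !inE => /or4P[] /eqP -> ; rewrite /in_rect /=;
  move=> [_ /andP[h1 h2]]; lra.
- move=> [q]; rewrite !inE => /or4P[] /eqP -> ; rewrite /in_rect /=;
  move=> [/andP[h1 h2] _]; lra.
Qed.

Lemma pierce_cross (R : realType) (a b : rect R) :
  pierce a b -> cross a b \/ cross b a.
Proof.
move=> [[p [ha hb]] [n1 n2]].
have := no_corner ha hb n1; have := no_corner hb ha n2.
move: ha hb; rewrite /in_rect /cross => -[/andP[x1 x2] /andP[y1 y2]] [/andP[x3 x4] /andP[y3 y4]].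
move=> [[h1 h2]|[h1 h2]] [[h3 h4]|[h3 h4]].
- exfalso; lra.
- by left; split => //; split => //; split.
- by right; split => //; split => //; split.
- exfalso; lra.
Qed.

Theorem theorem2 (R : realType) (T : finType) (rect_of : T -> rect R)
  (Hinj : injective rect_of) (Hvalid : forall t, rect_valid (rect_of t)) :
  comparability_graph (piercing_graph rect_of).
Proof.
exists (fun x y => cross (rect_of x) (rect_of y)).
split; [|split].
- move=> x [h _]; lra.
- move=> x y z [a1 [a2 [a3 a4]]] [b1 [b2 [b3 b4]]].
  split; [|split; [|split]]; lra.
- move=> x y nxy; split.
  + by move=> [_ /pierce_cross].
  + move=> h; split => //.
    case: h => h; first exact: cross_pierce.
    have := cross_pierce (Hvalid y) (Hvalid x) h.
    move=> [[q [i1 i2]] [j k]]; split; last by split.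
    by exists q.
Qed.
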